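(* Let $X$ be a Banach space and let $M\subseteq B(X)$ be a precompact set. Then $\|M\|_{\chi}=\chi(MX_{\odot})$, where $MX_{\odot}=\{Tx: T\in M,\ x\in X,\ \|x\|\le 1\}$.
   Context: $B(X)$ is the algebra of bounded linear operators on $X$ and $X_\odot$ is the closed unit ball of $X$. For a bounded subset $E$ of a Banach space, the Hausdorff measure of noncompactness $\chi(E)$ is the infimum of all $t>0$ such that $E$ has a finite $t$-net. For $T\in B(X)$, $\|T\|_\chi=\chi(TX_\odot)$, and for a set $M\subseteq B(X)$, $\|M\|_\chi=\sup\{\|T\|_\chi: T\in M\}$. *)

(* Defs.v *)
From HB Require Import structures.
From mathcomp Require Import all_boot all_order all_algebra.
From mathcomp Require Import all_classical all_reals all_analysis.
Set Implicit Arguments. Unset Strict Implicit. Unset Printing Implicit Defensive.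
Import Order.TTheory GRing.Theory Num.Theory.
Import numFieldNormedType.Exports.
Local Open Scope classical_set_scope.
Local Open Scope ring_scope.

Section Defs.
Context {R : realType} {X : normedModType R}.

Definition unit_ball : set X := [set x | `|x| <= 1].

Definition bounded_op (T : X -> X) : Prop :=
  (forall (a : R) (x y : X), T (a *: x + y) = a *: T x + T y) /\
  exists C : R, forall x, `|T x| <= C * `|x|.

Definition is_net (E : set X) (F : seq X) (t : R) : Prop :=
  forall x, E x -> exists2 y, y \in F & `|x - y| <= t.

Definition hchi (E : set X) : R :=
  inf [set t : R | 0 < t /\ exists F : seq X, is_net E F t].

Definition chi_norm (T : X -> X) : R := hchi (T @` unit_ball).

Definition chi_norm_set (M : set (X -> X)) : R := sup (chi_norm @` M).

Definition apply_set (M : set (X -> X)) : set X :=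
  [set y | exists T, M T /\ exists2 x, unit_ball x & y = T x].

(* precompact (totally bounded) subset of B(X) for the operator norm:
   every ε > 0 admits a finite ε-net of bounded operators, where
   ||T - S|| <= ε is written out as sup_{||x||<=1} ||T x - S x|| <= ε. *)
Definition precompact_ops (M : set (X -> X)) : Prop :=
  forall e : R, 0 < e -> exists (n : nat) (S : 'I_n -> X -> X),
    (forall i, bounded_op (S i)) /\
    forall T, M T -> exists i : 'I_n,
      forall x, unit_ball x -> `|T x - S i x| <= e.
End Defs.

(* Main.v *)
Require Import Defs.
From mathcomp Require Import all_boot all_order all_algebra.
From mathcomp Require Import all_classical all_reals all_analysis.
From mathcomp Require Import ring.
Import numFieldNormedType.Exports.
Local Open Scope classical_set_scope.
Local Open Scope ring_scope.
Import Order.TTheory GRing.Theory Num.Theory.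

Section Helpers.
Context {R : realType} {X : completeNormedModType R}.

Let hset (E : set X) := [set t : R | 0 < t /\ exists F : seq X, is_net E F t].

Lemma hchi_ge0 (E : set X) : 0 <= hchi E.
Proof.
change (0 <= inf (hset E)); have [->|ne] := eqVneq (hset E) set0; first by rewrite inf0.
apply: lb_le_inf; first by apply/set0P; exact: ne.
by move=> t [/ltW].
Qed.

Lemma hchi_le (E : set X) F t : 0 < t -> is_net E F t -> hchi E <= t.
Proof.
move=> t0 hn; change (inf (hset E) <= t).
have := @ge_inf R (hset E); apply => //.
by exists 0 => u [/ltW].
by split => //; exists F.
Qed.

Lemma is_net_sub (E1 E2 : set X) F t : E1 `<=` E2 -> is_net E2 F t -> is_net E1 F t.
Proof. by move=> sub hn x /sub /hn. Qed.

Lemma hchi_mono (E1 E2 : set X) : E1 `<=` E2 ->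
  (exists F t, 0 < t /\ is_net E2 F t) -> hchi E1 <= hchi E2.
Proof.
move=> sub [F [t [t0 hn]]]; change (hchi E1 <= inf (hset E2)).
apply: lb_le_inf; first by exists t; split => //; exists F.
move=> u [u0 [G hG]]; exact: (hchi_le _ _ _ u0 (is_net_sub _ _ _ _ sub hG)).
Qed.

Lemma hchi_adh (E : set X) e : 0 < e -> (exists F t, 0 < t /\ is_net E F t) ->
  exists t F, [/\ 0 < t, is_net E F t & t < hchi E + e].
Proof.
move=> e0 [F [t [t0 hn]]].
have hi : has_inf (hset E).
  split; first by exists t; split => //; exists F.
  by exists 0 => u [/ltW].
have [u [u0 [G hG]] ue] := @inf_adherent R (hset E) e e0 hi.
by exists u, G; split.
Qed.

End Helpers.

Theorem lemma2p1 (R : realType) (X : completeNormedModType R)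
  (M : set (X -> X)) (hB : forall T, M T -> bounded_op T)
  (hM : precompact_ops M) :
  chi_norm_set M = hchi (apply_set M).
Proof.
have H0 : exists F t, 0 < t /\ is_net (apply_set M) F t.
  have [n [S [hS hcl]]] := hM 1 ltr01.
  have hc : forall i, exists c : R, forall x, unit_ball x -> `|S i x| <= c.
    move=> i; have [_ [C hC]] := hS i; exists `|C| => x bx.
    apply: (le_trans (hC x)); apply: (le_trans (ler_norm _)).
    rewrite normrM; rewrite -[leRHS]mulr1; apply: ler_wpM2l => //.
    by rewrite normr_id.
  have [c hc'] := choice hc.
  exists [:: 0], (\big[Order.max/0]_i c i + 1); split.
    by apply: (lt_le_trans ltr01); rewrite lerDr; apply/bigmax_geP; left.
  move=> y [T [MT [x bx ->]]]; exists 0; first by rewrite inE.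
  have [i hi] := hcl T MT; rewrite subr0.
  have -> : T x = (T x - S i x) + S i x by rewrite subrK.
  apply: (le_trans (ler_normD _ _)); rewrite addrC; apply: lerD; last exact: hi.
  by apply/bigmax_geP; right; exists i => //; apply: hc'.
have sub : forall T, M T -> T @` unit_ball `<=` apply_set M.
  by move=> T MT y [x bx <-]; exists T; split => //; exists x.
have chiT : forall T, M T -> chi_norm T <= hchi (apply_set M).
  by move=> T MT; apply: hchi_mono => //; exact: sub.
have ubs : has_ubound (chi_norm @` M).
  by exists (hchi (apply_set M)) => u [T MT <-]; exact: chiT.
have leT : forall T, M T -> chi_norm T <= chi_norm_set M.
  by move=> T MT; apply: (ub_le_sup ubs); exists T.
have s0 : 0 <= chi_norm_set M.
  have [->|/set0P [T MT]] := eqVneq M set0.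
    by rewrite /chi_norm_set image_set0 sup0.
  apply: le_trans (leT T MT); exact: hchi_ge0.
apply/eqP; rewrite eq_le; apply/andP; split.
  have [->|/set0P [T0 MT0]] := eqVneq M set0.
    by rewrite /chi_norm_set image_set0 sup0 hchi_ge0.
  apply: ge_sup; first by exists (chi_norm T0), T0.
  by move=> u [T MT <-]; exact: chiT.
apply/unstable.ler_gtP => z hz.
set s := chi_norm_set M in hz s0 leT *.
pose e := (z - s) / 3.
have e0 : 0 < e by rewrite divr_gt0 // subr_gt0.
have ze : z = s + e + e + e by rewrite /e; field.
have [n [S [hS hcl]]] := hM e e0.
have hF : forall i : 'I_n, exists F : seq X, forall T, M T ->
    (forall x, unit_ball x -> `|T x - S i x| <= e) ->
    forall x, unit_ball x -> exists2 y, y \in F & `|T x - y| <= z.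
  move=> i.
  have [[T0 [MT0 cl0]]|nT] := pselect (exists T0, M T0 /\ forall x, unit_ball x -> `|T0 x - S i x| <= e); last first.
    by exists [::] => T MT cl; exfalso; apply: nT; exists T.
  have Hn : exists F t, 0 < t /\ is_net (T0 @` unit_ball) F t.
    have [F [t [t0 hn]]] := H0.
    by exists F, t; split => //; apply: (is_net_sub _ _ _ _ (sub T0 MT0)).
  have [t [F [t0 hn ht]]] := hchi_adh _ _ e0 Hn.
  exists F => T MT cl x bx.
  have [y yF hy] := hn (T0 x) (ex_intro2 _ _ x bx erefl).
  exists y => //.
  have -> : T x - y = (T x - S i x) + ((S i x - T0 x) + (T0 x - y)).
    by rewrite !addrA subrK subrK.
  apply: (le_trans (ler_normD _ _)).
  have -> : z = e + (e + t + (s + e - t)) by rewrite ze; ring.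
  apply: lerD; first exact: cl.
  apply: (le_trans (ler_normD _ _)).
  have h1 : `|S i x - T0 x| <= e by rewrite distrC; exact: cl0.
  apply: (le_trans (lerD h1 hy)); rewrite lerDl.
  rewrite subr_ge0; apply: (le_trans (ltW ht)); rewrite lerD2r; exact: leT.
have [Fi hFi] := choice hF.
apply: (hchi_le _ (flatten [seq Fi i | i <- enum 'I_n]) z).
  exact: (le_lt_trans s0 hz).
move=> y [T [MT [x bx ->]]].
have [i hi] := hcl T MT.
have [y' y'F hy'] := hFi i T MT hi x bx.
exists y' => //; apply/flatten_mapP; exists i => //; exact: mem_enum.
Qed.
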